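(* Let $(D,s,t,k)$ be a reduced instance of Rooted $k$-Distinct Branchings, let $(\hat T,\{B_x\})$ be the $s$-rooted cut decomposition of $D$, and let $\hat P=x_1\dots x_\ell$ be a degenerate path of $\hat T$ with $t\notin V(\hat P)$. Let $Y\subseteq V(\hat P)$ be the set of tails of arcs in $A^0$. If $(D,s,t,k)$ is not a positive instance, then $|Y|<k$.
   Context: Digraphs are finite and without loops; paths are directed. An out-tree (in-tree) is an oriented tree with exactly one vertex of in-degree zero (out-degree zero), its root; an out-branching (in-branching) of $D$ is a spanning out-tree (in-tree). An instance $(D,s,t,k)$ of Rooted $k$-Distinct Branchings ($D$ a digraph, $s,t\in V(D)$, $k$ an integer) is positive if $D$ has an out-branching $T^+$ rooted at $s$ and an in-branching $T^-$ rooted at $t$ with $|A(T^+)\setminus A(T^-)|\ge k$. It is reduced if $D$ has an out-branching rooted at $s$, an in-branching rooted at $t$, and every arc of $D$ lies in some out-branching rooted at $s$ or in some in-branching rooted at $t$. A vertex $v$ is bi-reachable from $r$ if there are two internally vertex-disjoint directed paths from $r$ to $v$. For a digraph $H$ with at least two vertices and $r\in V(H)$ such that every vertex of $H$ is reachable from $r$, the diblock $B_r$ of $r$ in $H$ is the set of all vertices bi-reachable from $r$, together with $r$ and all out-neighbours of $r$. For $x\in B_r\setminus\{r\}$ let $X_x$ be the set of vertices $v\notin B_r$ such that every directed $r$–$v$ path intersects $B_r$ for the last time in $x$; $x$ is a bottleneck of $B_r$ if $X_x\ne\emptyset$. The $r$-rooted cut decomposition $(\hat T,\{B_x\}_{x\in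 V(\hat T)})$ of $H$ is defined recursively: $\hat T$ is a rooted tree with root $r$; the set associated with the root is $B_r$; the children of $r$ are the bottlenecks of $B_r$; for each bottleneck $x$, the subtree rooted at $x$ with its sets is the $x$-rooted cut decomposition of $H[X_x\cup\{x\}]$. $B_x$ is degenerate if $x$ is an internal node of $\hat T$ and $|B_x|=2$. A path $x_1\dots x_\ell$ in $\hat T$ is degenerate if it is a subpath of a root-to-leaf path of $\hat T$ (with $x_{i+1}$ a child of $x_i$) and every $B_{x_i}$ is degenerate. For such a path $\hat P$, $A^0$ is the set of arcs $x_jx_i$ of $D$ with $j>i$. *)

(* Defs.v *)
From Stdlib Require Import ClassicalEpsilon.
From mathcomp Require Import all_boot.
Set Implicit Arguments. Unset Strict Implicit. Unset Printing Implicit Defensive.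

Definition pbool (P : Prop) : bool :=
  if excluded_middle_informative P then true else false.

Section Digraphs.
Variable V : finType.
Implicit Types (D T : {set V * V}) (S : {set V}).

Definition loopless D := forall v : V, (v, v) \notin D.

Definition ugraph T : rel V := fun x y => ((x, y) \in T) || ((y, x) \in T).
Definition indeg T v := #|[set u | (u, v) \in T]|.
Definition outdeg T v := #|[set w | (v, w) \in T]|.

(* T is (the arc set of) an oriented tree spanning all vertices of V:
   its underlying multigraph is connected with |V|-1 edges, i.e. a tree. *)
Definition spanning_oriented_tree T :=
  (forall x y : V, connect (ugraph T) x y) /\ #|T| = #|V|.-1.

Definition out_branching D s T :=
  [/\ T \subset D, spanning_oriented_tree T &
      forall v, (indeg T v == 0) = (v == s)].

Definition in_branching D t T :=
  [/\ T \subset D, spanning_oriented_tree T &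
      forall v, (outdeg T v == 0) = (v == t)].

Definition positive D s t (k : nat) :=
  exists T1 T2, [/\ out_branching D s T1, in_branching D t T2 &
                    k <= #|T1 :\: T2|].

Definition reduced D s t :=
  [/\ (exists T, out_branching D s T), (exists T, in_branching D t T) &
      forall a, a \in D ->
        (exists T, out_branching D s T /\ a \in T) \/
        (exists T, in_branching D t T /\ a \in T)].

(* directed path r = x0, x1 ... xm = v (p = [x1..xm]) in the induced
   subdigraph D[S] *)
Definition dpath D S r v (p : seq V) :=
  [&& path (fun x y => (x, y) \in D) r p, last r p == v, uniq (r :: p) &
      all (fun x => x \in S) (r :: p)].

Definition bireach D S r v :=
  exists p1 p2, [/\ dpath D S r v p1, dpath D S r v p2 &
                    forall x, x \in p1 -> x \in p2 -> x = v].

Definition diblock D S r : {set V} :=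
  [set v in S | [|| v == r, (r, v) \in D | pbool (bireach D S r v)]].

Definition Xset D S r x : {set V} :=
  [set v in S :\: diblock D S r |
     pbool ((exists p, dpath D S r v p) /\
            forall p, dpath D S r v p ->
              last r [seq y <- p | y \in diblock D S r] = x)].

Definition bottleneck D S r x :=
  [&& x \in diblock D S r, x != r & Xset D S r x != set0].

(* cd_node D s S x : x is a node of the s-rooted cut decomposition of D,
   and S is the vertex set of the subdigraph whose x-rooted cut decomposition
   is the subtree at x (so B_x = diblock D S x). *)
Inductive cd_node D (s : V) : {set V} -> V -> Prop :=
| cd_root : cd_node D s [set: V] s
| cd_child S x y : cd_node D s S x -> bottleneck D S x y ->
                   cd_node D s (Xset D S x y :|: [set y]) y.

Definition cd_childof D s x y :=
  exists S, cd_node D s S x /\ bottleneck D S x y.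

(* B_x is degenerate: x is internal and |B_x| = 2 *)
Definition degenerate_node D s x :=
  exists S, [/\ cd_node D s S x, (exists y, bottleneck D S x y) &
                #|diblock D S x| = 2].

Definition degenerate_path D s (xs : seq V) :=
  [/\ xs != [::],
      forall i, i < size xs -> degenerate_node D s (nth s xs i) &
      forall i, i.+1 < size xs -> cd_childof D s (nth s xs i) (nth s xs i.+1)].

Definition A0 D (xs : seq V) : {set V * V} :=
  [set a in D | [exists i : 'I_(size xs), exists j : 'I_(size xs),
     (i < j) && (a == (nth a.1 xs j, nth a.1 xs i))]].

Definition Yset D (xs : seq V) : {set V} := [set a.1 | a in A0 D xs].

End Digraphs.

(* Main.v *)
From Stdlib Require Import ClassicalEpsilon.
Require Import Defs.
From mathcomp Require Import all_boot.
Set Implicit Arguments. Unset Strict Implicit. Unset Printing Implicit Defensive.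

Lemma pboolP (P : Prop) : pbool P <-> P.
Proof. rewrite /pbool; case: excluded_middle_informative => p; split => //. Qed.

Section A.
Variable V : finType.
Variable D : {set V * V}.
Local Notation E := (fun x y : V => (x, y) \in D).

Lemma XsetP S x y v : v \in Xset D S x y ->
  [/\ v \in S, v \notin diblock D S x, (exists p, dpath D S x v p) &
      forall p, dpath D S x v p -> last x [seq z <- p | z \in diblock D S x] = y].
Proof.
rewrite !inE => /andP[/andP[nB vS] /pboolP[ex all]]; by split.
Qed.

Lemma helper S x y c v P Q :
  (forall p, dpath D S x v p -> last x [seq z <- p | z \in diblock D S x] = y) ->
  dpath D S x c P -> c != x -> c \in diblock D S x -> c != y ->
  path E c Q -> last c Q = v -> uniq (c :: Q) -> all (fun z => z \in S) (c :: Q) ->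
  (forall z, z \in Q -> z \notin diblock D S x) ->
  y != x -> y \in P.
Proof.
move=> Xp /and4P[pP /eqP lP uP aP] cx cB cy pQ lQ uQ aQ nQ yx.
have xS : x \in S by case/andP: aP.
have xB : x \in diblock D S x by rewrite !inE xS eqxx.
have cP : c \in P.
  have := mem_last x P; rewrite lP inE (negbTE cx) //.
have hR : has (mem (c :: Q)) P by apply/hasP; exists c => //; exact: mem_head.
move: pP uP aP; case/split_find: hR => z pre post zR npre.
rewrite cat_path rcons_path /= => /andP[/andP[ppre ez] _].
rewrite cat_uniq rcons_uniq => /andP[xn /and3P[/andP[zpre upre] _ _]].
rewrite all_cat all_rcons => /andP[_ /andP[/andP[zS apre] _]].
have xpre : x \notin pre by apply: contra xn; rewrite mem_cat mem_rcons inE => ->; rewrite orbT.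
have [q2 [[pq2 lq2 uq2 aq2 sq2] [nq2 zc]]] : exists q2, [/\ path E z q2, last z q2 = v,
    uniq (z :: q2), all (fun w => w \in S) (z :: q2) &
    {subset z :: q2 <= c :: Q}] /\
    ((forall w, w \in q2 -> w \notin diblock D S x) /\ (z != c -> z \notin diblock D S x)).
  move: zR; rewrite /= inE; case: eqP => [-> _ | /eqP zc /= zQ].
    by exists Q; split; split => // /eqP.
  move: pQ lQ uQ aQ nQ; case/splitPr: zQ => q1 q2'.
  rewrite cat_path last_cat => /andP[_ /= /andP[_ pq]] lq.
  rewrite -cat_cons cat_uniq => /and3P[_ _ /andP[_ uq]].
  rewrite /= all_cat => /andP[_ /andP[_ aq]] nq.
  exists q2'; split; split => //.
  - move=> w wz; rewrite inE mem_cat inE; move: wz; rewrite inE => /orP[->|->]; by rewrite !orbT.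
  - by move=> w wq; apply: nq; rewrite mem_cat inE wq !orbT.
  - by move=> _; apply: nq; rewrite mem_cat inE eqxx orbT.
have dp : dpath D S x v (pre ++ z :: q2).
  apply/and4P; split.
  - by rewrite cat_path ppre /= ez.
  - by rewrite last_cat /= lq2.
  - rewrite cons_uniq cat_uniq upre uq2 andbT mem_cat negb_or xpre; apply/andP; split.
      apply/negP => /sq2; rewrite inE => /orP[/eqP xc|xQ].
        by move: cx; rewrite xc eqxx.
      by move: (nQ _ xQ); rewrite xB.
    apply/hasPn => w /sq2 wR; apply/negP => wpre.
    by move/hasPn: npre => /(_ _ wpre); rewrite /= wR.
  - by rewrite /= xS all_cat apre.
have := Xp _ dp.
rewrite filter_cat /=.
case: (boolP (z == c)) => [/eqP zc'|/zc nzB].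
  subst z; rewrite cB (_ : [seq w <- q2 | w \in diblock D S x] = [::]) ?last_cat /=.
    by move=> zy; move: cy; rewrite zy eqxx.
  by apply/eqP; rewrite -[_ == _]negbK -has_filter; apply/hasPn => w /nq2.
rewrite (negbTE nzB) (_ : [seq w <- q2 | w \in diblock D S x] = [::]) ?cats0.
  move=> ly.
  have : last x [seq z0 <- pre | z0 \in diblock D S x] \in x :: [seq z0 <- pre | z0 \in diblock D S x] by apply: mem_last.
  rewrite ly inE (negbTE yx) mem_filter => /andP[_ yp].
  by rewrite mem_cat mem_rcons inE yp orbT.
by apply/eqP; rewrite -[_ == _]negbK -has_filter; apply/hasPn => w /nq2.
Qed.

Lemma bottleneckP S x y : bottleneck D S x y ->
  [/\ y \in diblock D S x, y != x & Xset D S x y != set0].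
Proof. by case/and3P. Qed.

Lemma noescape S x y v c Q : bottleneck D S x y -> v \in Xset D S x y ->
  c \in diblock D S x -> c != x -> c != y ->
  path E c Q -> last c Q = v -> uniq (c :: Q) -> all (fun z => z \in S) (c :: Q) ->
  (forall z, z \in Q -> z \notin diblock D S x) -> False.
Proof.
move=> /bottleneckP[_ yx _] /XsetP[_ _ [p0 /and4P[_ _ _ /andP[xS _]]] Xp] cB cx cy pQ lQ uQ aQ nQ.
move: (cB); rewrite !inE => /andP[cS /or3P[/eqP cx'| xcD | /pboolP [p1 [p2 [d1 d2 disj]]]]].
- by move: cx; rewrite cx' eqxx.
- have dp : dpath D S x c [:: c].
    by rewrite /dpath /= xcD eqxx /= inE eq_sym cx xS cS.
  have := helper Xp dp cx cB cy pQ lQ uQ aQ nQ yx.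
  by rewrite inE => /eqP yc; move: cy; rewrite yc eqxx.
- have y1 := helper Xp d1 cx cB cy pQ lQ uQ aQ nQ yx.
  have y2 := helper Xp d2 cx cB cy pQ lQ uQ aQ nQ yx.
  by move: cy; rewrite (disj _ y1 y2) eqxx.
Qed.

Lemma split_last (T : eqType) (a : pred T) x W : exists W1 W2,
  [/\ W = W1 ++ W2, last x W1 = last x (filter a W) & ~~ has a W2].
Proof.
elim: W x => [|a0 W IH] x; first by exists [::], [::].
have [W1 [W2 [-> l1 h2]]] := IH a0.
rewrite /=; case: (boolP (a a0)) => aa0.
  by exists (a0 :: W1), W2; split.
case: (boolP (has a (W1 ++ W2))) => hW.
  exists (a0 :: W1), W2; split => //=; rewrite l1.
  by move: hW; rewrite has_filter; case: (filter a (W1 ++ W2)). 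
exists [::], (a0 :: W1 ++ W2); split => //=.
  by move: hW; rewrite has_filter negbK => /eqP ->.
by rewrite negb_or aa0.
Qed.

Lemma walkK S x y v W : bottleneck D S x y -> v \in Xset D S x y ->
  path E x W -> last x W = v -> all (fun z => z \in S) (x :: W) ->
  last x [seq z <- W | z \in diblock D S x] = y.
Proof.
move=> bn vX pW lW aW.
have [_ yx _] := bottleneckP bn.
have [_ _ _ Xp] := XsetP vX.
have [W1 [W2 [eW l1 h2]]] := split_last (fun z => z \in diblock D S x) x W.
move: l1; set c := last x [seq z <- W | z \in diblock D S x] => l1.
have cm : c \in x :: [seq z <- W | z \in diblock D S x] by apply: mem_last.
have xS : x \in S by case/andP: aW.
have cS : c \in S.
  move: cm; rewrite inE => /orP[/eqP -> //|]; rewrite mem_filter => /andP[_ cW].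
  by move/allP: aW; apply; rewrite inE cW orbT.
have cB : c \in diblock D S x.
  move: cm; rewrite inE => /orP[/eqP ->|]; last by rewrite mem_filter => /andP[].
  by rewrite !inE xS eqxx.
move: pW lW aW; rewrite eW cat_path last_cat l1 => /andP[_ pW2] lW2.
rewrite /= all_cat => /andP[_ /andP[_ aW2]].
move: lW2; case: (shortenP pW2) => p' pp' up' sp' lp'.
have nB : forall z, z \in p' -> z \notin diblock D S x.
  by move=> z /sp' zW2; apply: contra h2 => zB; apply/hasP; exists z.
have ap' : all (fun z => z \in S) (c :: p').
  by rewrite /= cS; apply/allP => z /sp' zW; move/allP: aW2; apply.
case: (eqVneq c x) => [cx|cx].
  have dp : dpath D S x v p'.
    by rewrite /dpath -cx pp' lp' eqxx up' ap'.
  have := Xp _ dp.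
  rewrite (_ : [seq z <- p' | z \in diblock D S x] = [::]) /=.
    by move=> xy; move: yx; rewrite xy eqxx.
  by apply/eqP; rewrite -[_ == _]negbK -has_filter; apply/hasPn.
case: (eqVneq c y) => // cy.
by case: (noescape bn vX cB cx cy pp' lp' up' ap' nB).
Qed.

Definition Inv s (S : {set V}) x := forall p, path E s p -> last s p \in S ->
  exists p1 p2, [/\ p = p1 ++ p2, last s p1 = x & all (fun z => z \in S) p2].

Lemma cd_inv s S x : cd_node D s S x -> Inv s S x.
Proof.
elim => [|S0 x0 y H IH bn] p pp lp.
  by exists [::], p; split => //; apply/allP => z; rewrite inE.
move: lp; rewrite in_setU in_set1 => /orP[vX|/eqP ly]; last first.
  by exists p, [::]; rewrite cats0.
have [vS _ [p0 /and4P[_ _ _ /andP[xS _]]] _] := XsetP vX.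
have [p1 [p2 [ep l1 a2]]] := IH p pp vS.
move: pp; rewrite ep cat_path l1 => /andP[_ pp2].
have lp2 : last x0 p2 = last s p by rewrite ep last_cat l1.
have ax2 : all (fun z => z \in S0) (x0 :: p2) by rewrite /= xS a2.
have K := walkK bn vX pp2 lp2 ax2.
have [W1 [W2 [eW lW1 hW2]]] := split_last (fun z => z \in diblock D S0 x0) x0 p2.
exists (p1 ++ W1), W2; split.
- by rewrite eW catA.
- by rewrite last_cat l1 lW1 K.
apply/allP => w wW2; rewrite in_setU in_set1; apply/orP; left.
have wB : w \notin diblock D S0 x0 by apply: contra hW2 => wB; apply/hasP; exists w.
have wS : w \in S0 by move/allP: a2; apply; rewrite eW mem_cat wW2 orbT.
case/splitPr: wW2 eW hW2 => u1 u2 eW hW2.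
have e2 : p2 = (W1 ++ rcons u1 w) ++ u2 by rewrite eW -catA cat_rcons.
move: pp2 lp2 ax2; rewrite e2 cat_path last_cat last_cat last_rcons => /andP[pw pu2] lu2.
rewrite /= all_cat => /andP[xS' /andP[aw au2]].
rewrite last_cat last_rcons in lu2.
rewrite /Xset in_set in_setD wB wS /=; apply/pboolP; split.
  have [r [pr ur sr lr]] : exists r, [/\ path E x0 r, uniq (x0 :: r),
      {subset r <= W1 ++ rcons u1 w} & last x0 r = last x0 (W1 ++ rcons u1 w)].
    by case: (shortenP pw) => r pr ur sr; exists r.
  rewrite last_cat last_rcons in lr.
  exists r; rewrite /dpath pr lr eqxx ur /= xS /=.
  apply/allP => z /sr; move/allP: aw; apply.
move=> r /and4P[pr /eqP lr ur ar].
have := @walkK S0 x0 y (last s p) (r ++ u2) bn vX.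
rewrite cat_path pr lr pu2 last_cat lr lu2 -cat_cons all_cat ar au2 filter_cat.
move=> /(_ erefl erefl erefl).
rewrite (_ : [seq z <- u2 | z \in diblock D S0 x0] = [::]) ?cats0 //.
apply/eqP; rewrite -[_ == _]negbK -has_filter; apply: contra hW2 => /hasP[z zu zB].
by apply/hasP; exists z => //; rewrite mem_cat inE zu !orbT.
Qed.

Lemma dom1 s a b : cd_childof D s a b ->
  forall p, path E s p -> last s p = b -> a \in s :: p.
Proof.
move=> [S [H bn]] p pp lp.
have [bB _ _] := bottleneckP bn.
have bS : b \in S by move: bB; rewrite inE => /andP[].
have lS : last s p \in S by rewrite lp.
have [p1 [p2 [-> l1 _]]] := cd_inv H pp lS.
by rewrite -l1 -cat_cons mem_cat mem_last.
Qed.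
End A.

Section C.
Variable V : finType.
Variable e : rel V.
Variable r : V.
Hypothesis conn : forall x y, connect (fun a b => e a b || e b a) x y.
Hypothesis card : #|[set a : V * V | e a.1 a.2]| = #|V|.-1.
Hypothesis deg : forall v, (#|[set u | e u v]| == 0) = (v == r).

Lemma sum_indeg : \sum_v #|[set u | e u v]| = #|[set a : V * V | e a.1 a.2]|.
Proof.
have L : #|[set a : V * V | e a.1 a.2]| = \sum_(a : V * V) (e a.1 a.2 : nat).
  rewrite -sum1_card big_mkcond; apply: eq_bigr => a _; rewrite inE; by case: (e _ _).
have L2 w : #|[set u | e u w]| = \sum_(u : V) (e u w : nat).
  rewrite -sum1_card big_mkcond; apply: eq_bigr => a _; rewrite inE; by case: (e _ _).
rewrite L (eq_bigr _ (fun w _ => L2 w)) exchange_big /=.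
by rewrite (pair_big xpredT xpredT (fun u w => (e u w : nat))).
Qed.

Lemma indeg1 v : v != r -> #|[set u | e u v]| = 1.
Proof.
move=> vr.
have pos w : w != r -> 0 < #|[set u | e u w]| by rewrite lt0n deg.
have S1 : \sum_(w | w != r) #|[set u | e u w]| = #|V|.-1.
  rewrite -card -sum_indeg [RHS](bigD1 r) //=.
  by have := deg r; rewrite eqxx => /eqP ->.
have S2 : \sum_(w | w != r) 1 = #|V|.-1 by rewrite sum1_card cardC1.
have S3 : \sum_(w | w != r) (#|[set u | e u w]| - 1) + \sum_(w | w != r) 1
          = \sum_(w | w != r) #|[set u | e u w]|.
  by rewrite -big_split /=; apply: eq_bigr => w wr; rewrite subnK // pos.
move: S3; rewrite S1 S2 -{2}(add0n #|V|.-1) => /addIn /eqP; rewrite sum_nat_eq0.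
move=> /forall_inP /(_ v vr) /eqP.
by move: (pos v vr); case: #|_| => // [[|n]].
Qed.

Lemma uniq_in v x y : v != r -> e x v -> e y v -> x = y.
Proof.
move=> vr ex ey; have := indeg1 vr; move/eqP; rewrite eqn_leq => /andP[/card_le1_eqP H _].
by apply: H; rewrite inE.
Qed.

Lemma reach v : connect e r v.
Proof.
have back x y : e x y -> connect e r y -> connect e r x.
  move=> exy /connectP[p pp ly].
  have yr : y != r.
    apply/negP => /eqP yr; move: (deg r); rewrite eqxx -yr => /eqP/eqP.
    by rewrite cards_eq0 => /eqP/setP/(_ x); rewrite !inE exy.
  move: pp ly; case/lastP: p => [/= _ yr'|p z]; first by move: yr; rewrite yr' eqxx.
  rewrite rcons_path last_rcons => /andP[pp ez] yz; subst z.
  rewrite (uniq_in yr exy ez); apply/connectP; by exists p.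
have /connectP[p pp ->] := conn r v.
suff H : forall x q, connect e r x -> path (fun a b => e a b || e b a) x q ->
  connect e r (last x q) by apply: H pp; apply: connect0.
move=> x q; elim: q x => //= a q IH x rx /andP[/orP[exa|eax] pa].
  by apply: IH pa; apply: connect_trans rx (connect1 exa).
by apply: IH pa; apply: back eax rx.
Qed.
End C.

Section Br.
Variable V : finType.
Implicit Types (D T : {set V * V}).

Lemma out_props D s T : out_branching D s T ->
  [/\ T \subset D,
      (forall v x y, v != s -> (x, v) \in T -> (y, v) \in T -> x = y),
      (forall v, connect (fun a b => (a, b) \in T) s v) &
      (forall x, (x, s) \notin T)].
Proof.
case=> sub [conn card] deg.
have card' : #|[set a : V * V | (a.1, a.2) \in T]| = #|V|.-1.
  by rewrite -card; apply: eq_card => [[a b]]; rewrite inE.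
have conn' : forall x y, connect (fun a b => ((a, b) \in T) || ((b, a) \in T)) x y
  by exact: conn.
split => //.
- by move=> v x y vs; apply: (@uniq_in V (fun a b => (a, b) \in T) s card' deg).
- by apply: (@reach V (fun a b => (a, b) \in T) s conn' card' deg).
- move=> x; apply/negP => xs; move: (deg s); rewrite eqxx /indeg cards_eq0.
  by move=> /eqP/setP/(_ x); rewrite !inE xs.
Qed.

Lemma in_props D t T : in_branching D t T ->
  [/\ T \subset D,
      (forall v x y, v != t -> (v, x) \in T -> (v, y) \in T -> x = y),
      (forall v, connect (fun a b => (a, b) \in T) v t) &
      (forall x, (t, x) \notin T)].
Proof.
case=> sub [conn card] deg.
have card' : #|[set a : V * V | (a.2, a.1) \in T]| = #|V|.-1.
  rewrite -card -(@card_preimset _ (fun a : V * V => (a.2, a.1))).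
    by apply: eq_card => [[a b]]; rewrite !inE.
  by move=> [a b] [c d] [-> ->].
have conn' : forall x y, connect (fun a b => ((b, a) \in T) || ((a, b) \in T)) x y.
  move=> x y; rewrite (eq_connect (e' := ugraph T)) ?conn // => a b.
  by rewrite /ugraph orbC.
have deg' : forall v, (#|[set u | (v, u) \in T]| == 0) = (v == t) by exact: deg.
split => //.
- by move=> v x y vs; apply: (uniq_in card' deg').
- move=> v; have := reach conn' card' deg' v.
  by rewrite (connect_rev (fun a b => (a, b) \in T)).
- move=> x; apply/negP => xs; move: (deg t); rewrite eqxx /outdeg cards_eq0.
  by move=> /eqP/setP/(_ x); rewrite !inE xs.
Qed.
End Br.

Lemma pref (T : eqType) (s u : T) p : u \in s :: p ->
  exists q r, p = q ++ r /\ last s q = u.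
Proof.
rewrite inE => /orP[/eqP ->|up]; first by exists [::], p.
case/splitPr: up => p1 p2; exists (rcons p1 u), p2; split.
  by rewrite cat_rcons.
by rewrite last_rcons.
Qed.

Section B.
Variable V : finType.
Variable D : {set V * V}.
Local Notation E := (fun x y : V => (x, y) \in D).
Variable s : V.
Variable xs : seq V.
Local Notation n := (size xs).
Local Notation X i := (nth s xs i).
Hypothesis Hchild : forall i, i.+1 < n -> cd_childof D s (X i) (X i.+1).
Hypothesis Hreach : forall v, exists p, [/\ path E s p, uniq (s :: p) & last s p = v].

Lemma dom i j : i < j -> j < n -> forall p, path E s p -> last s p = X j -> X i \in s :: p.
Proof.
elim: j => // j IH; rewrite ltnS leq_eqVlt => /orP[/eqP ->|ij] jn p pp lp.
  exact: (dom1 (Hchild jn) pp lp).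
have := dom1 (Hchild jn) pp lp.
case/pref => q [r [epq lq]].
move: pp; rewrite epq cat_path => /andP[pq _].
have := IH ij (ltnW jn) q pq lq.
by rewrite !inE mem_cat => /orP[->|->]; rewrite ?orbT.
Qed.

Lemma neqX i j : i < j -> j < n -> X i != X j.
Proof.
move=> ij jn; have [p [pp up lp]] := Hreach (X j).
case: j ij jn lp => // j ij jn lp.
have nb : X j != X j.+1.
  by have [S [_ /bottleneckP[_ ? _]]] := Hchild jn; rewrite eq_sym.
move: ij; rewrite ltnS leq_eqVlt => /orP[/eqP ->//|ij].
have := dom (ltnSn j) jn pp lp.
case/pref => q [r [epq lq]].
have rn : r != [::].
  by apply/eqP => r0; move: lp; rewrite epq r0 cats0 lq => /eqP; rewrite (negbTE nb).
have lr : X j.+1 \in r.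
  by rewrite -lp epq last_cat; move: rn; case: (r) => // a r0 _; rewrite /=; apply: mem_last.
move: pp up; rewrite epq cat_path -cat_cons cat_uniq => /andP[pq _] /and3P[_ dis _].
have := dom ij (ltnW jn) pq lq.
apply: contraL => /eqP ->; apply/negP => Xq; move/hasP: dis; apply.
by exists (X j.+1).
Qed.

Lemma avoidX i j p : i < j -> j < n -> path E s p -> uniq (s :: p) -> last s p = X i ->
  X j \notin s :: p.
Proof.
move=> ij jn pp up lp; apply/negP => /pref [q [r [epq lq]]].
move: pp up lp; rewrite epq cat_path -cat_cons cat_uniq last_cat lq => /andP[pq _] /and3P[_ dis _] lr.
have Xq := dom ij jn pq lq.
have nX := neqX ij jn.
move: dis lr; case: (r) => [_ /= lr|a r0 dis lr]; first by move: nX; rewrite lr eqxx.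
move/hasP: dis; apply; exists (X i) => //.
by rewrite -lr /=; apply: mem_last.
Qed.

Lemma avoidW i j j' w : i < j -> j <= j' -> j' < n -> path E (X i) w ->
  X j \notin X i :: w -> X j' \notin X i :: w.
Proof.
move=> ij jj' j'n pw nj; move: jj'; rewrite leq_eqVlt => /orP[/eqP <- //|jj'].
apply/negP => /pref [w1 [w2 [ew lw1]]].
have [p [pp up lp]] := Hreach (X i).
have jn : j < n := ltn_trans jj' j'n.
have nsp := avoidX ij jn pp up lp.
have pw1 : path E s (p ++ w1).
  by rewrite cat_path pp lp /=; move: pw; rewrite ew cat_path => /andP[].
have := dom jj' j'n pw1; rewrite last_cat lp lw1 => /(_ erefl).
rewrite -cat_cons mem_cat (negbTE nsp) /= => Xw1.
by move: nj; rewrite ew inE mem_cat Xw1 !orbT.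
Qed.

Lemma notout T i j : i < j -> j < n -> out_branching D s T -> (X j, X i) \notin T.
Proof.
move=> ij jn oT; apply/negP => Xin.
have [sub uin reach nos] := out_props oT.
case: (eqVneq (X i) s) => [Xs|Xs]; first by move: Xin; rewrite Xs (negbTE (nos _)).
have /connectP[p0 pp0 lp0] := reach (X i).
move: lp0; case: (shortenP pp0) => p pp up _ lp.
case/lastP: p pp up lp => [_ _ /= lp|p z]; first by move: Xs; rewrite lp eqxx.
rewrite rcons_path last_rcons => /andP[pp ez] up zX; subst z.
have lj := uin _ _ _ Xs ez Xin.
have pD : path E s p.
  by apply: sub_path pp => a b ab; apply: (subsetP sub).
have := dom ij jn pD lj.
by move: up; rewrite -rcons_cons rcons_uniq => /andP[/negbTE ->].
Qed.

Lemma inavoid T t i j : i < j -> j < n -> t \notin xs -> in_branching D t T ->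
  (X j, X i) \in T ->
  exists w, [/\ path E (X i) w, last (X i) w = t & X j \notin X i :: w].
Proof.
move=> ij jn tn iT Xin.
have [sub uout reach not] := in_props iT.
have /connectP[p0 pp0 lp0] := reach (X i).
move: lp0; case: (shortenP pp0) => w pw uw _ lw.
have pD : path E (X i) w.
  by apply: sub_path pw => a b ab; apply: (subsetP sub).
exists w; split => //.
rewrite inE negb_or eq_sym neqX //=; apply/negP => Xw.
have Xjt : X j != t.
  by apply: contraNneq tn => <-; apply: mem_nth; exact: jn.
move: pw uw lw; case/splitPr: Xw => w1 w2.
rewrite cat_path last_cat /= => /andP[_ /andP[_ pw2]] uw.
move: uw pw2; case: (w2) => [_ _ /= lt|z w3 uw /= /andP[ez _] _]; first by move: Xjt; rewrite lt eqxx.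
have zi := uout _ _ _ Xjt ez Xin; subst z.
by move: uw; rewrite /= mem_cat !inE eqxx !orbT.
Qed.
End B.

Theorem lemma17 (V : finType) (D : {set V * V}) (s t : V) (k : nat)
    (xs : seq V) :
  loopless D -> reduced D s t -> degenerate_path D s xs -> t \notin xs ->
  ~ positive D s t k -> #|Yset D xs| < k.
Proof.
move=> loopl red dp tn npos.
rewrite ltnNge; apply/negP => kY; apply: npos.
case: (red) => [[T0 oT0] [T1 iT1] arcs].
have [sub0 uin0 reach0 nos0] := out_props oT0.
have [sub1 uout1 reach1 not1] := in_props iT1.
case: dp => [_ _ Hchild].
pose E := fun x y : V => (x, y) \in D.
have Hreach : forall v, exists p, [/\ path E s p, uniq (s :: p) & last s p = v].
  move=> v; have /connectP[p0 pp0 lp0] := reach0 v.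
  move: lp0; case: (shortenP pp0) => p pp up _ lp; exists p; split => //.
  by apply: sub_path pp => a b ab; apply: (subsetP sub0).
set n := size xs.
have A0P : forall a, a \in A0 D xs -> a \in D /\
    exists i j, [/\ i < j, j < n & a = (nth s xs j, nth s xs i)].
  move=> a; rewrite inE => /andP[aD /existsP[i /existsP[j /andP[ij /eqP ea]]]].
  split => //; exists i, j; split => //.
  by rewrite ea !(@set_nth_default V xs s a.1) ?ltn_ord.
have [g Hg] : exists g : V -> V, forall y, y \in Yset D xs -> (y, g y) \in A0 D xs.
  apply: (@fin_all_exists V (fun _ => V) (fun y z => y \in Yset D xs -> (y, z) \in A0 D xs)).
  move=> y; case: (boolP (y \in Yset D xs)) => [/imsetP[a aA ->]|nY]; last by exists y.
  by exists a.2 => _; case: a aA.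
pose e' := fun u w : V => ((u, w) \in D) && ((u \in Yset D xs) ==> (w == g u)).
have Ycase : forall c, (forall c', c' < c -> forall v w, path E v w -> last v w = t ->
      (forall j, c' <= j -> j < n -> nth s xs j \notin v :: w) -> connect e' v t) ->
    forall v w, v \in Yset D xs -> path E v w -> last v w = t ->
      (forall j, c <= j -> j < n -> nth s xs j \notin v :: w) -> connect e' v t.
  move=> c IHc v w vY pw lw av.
  have [gD [i [j [ij jn [vj gi]]]]] := A0P _ (Hg _ vY).
  have jc : j < c.
    by rewrite ltnNge; apply/negP => cj; move: (av j cj jn); rewrite -vj mem_head.
  have e'v : e' v (nth s xs i) by rewrite /e' -gi gD vY eqxx.
  apply: connect_trans (connect1 e'v) _.
  move: gD; rewrite gi vj => gD.
  case: (arcs _ gD) => [[T [oT inT]]|[T [iT inT]]].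
    by move: (notout Hchild ij jn oT); rewrite inT.
  have [w' [pw' lw' aw']] := inavoid Hchild Hreach ij jn tn iT inT.
  apply: (IHc j jc _ w') => // j' jj' j'n.
  exact: (avoidW Hchild Hreach ij jj' j'n pw' aw').
have Q : forall c v w, path E v w -> last v w = t ->
    (forall j, c <= j -> j < n -> nth s xs j \notin v :: w) -> connect e' v t.
  elim/ltn_ind => c IHc v w; elim: w v => [|a w IHw] v pw lw av.
    case: (boolP (v \in Yset D xs)) => vY; first exact: (Ycase c IHc v [::]).
    by rewrite -lw; apply: connect0.
  case: (boolP (v \in Yset D xs)) => vY; first exact: (Ycase c IHc v (a :: w)).
  move: pw => /= /andP[va pw].
  have e'v : e' v a by rewrite /e'; move: va; rewrite /E => ->; rewrite (negbTE vY).
  apply: connect_trans (connect1 e'v) _.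
  apply: IHw => // j cj jn; move: (av j cj jn); rewrite !inE negb_or => /andP[_].
  by [].
have reach' : forall v, connect e' v t.
  move=> v; have /connectP[p pp lp] := reach1 v.
  apply: (Q n v p).
  - by apply: sub_path pp => a b ab; apply: (subsetP sub1).
  - by rewrite -lp.
  - by move=> j nj jn; move: (leq_trans jn nj); rewrite ltnn.
have dist : forall v, exists dv, (exists p, [/\ path e' v p, last v p = t & size p = dv]) /\
    (forall p, path e' v p -> last v p = t -> dv <= size p).
  move=> v.
  have ex : exists m, pbool (exists p, [/\ path e' v p, last v p = t & size p = m]).
    have /connectP[p pp lp] := reach' v; exists (size p); apply/pboolP; by exists p.
  case: (ex_minnP ex) => m /pboolP Pm minm; exists m; split => // p pp lp.
  by apply: minm; apply/pboolP; exists p.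
have [d Hd] := fin_all_exists dist.
have fex : forall v, exists w, v != t -> e' v w /\ d w < d v.
  move=> v; case: (eqVneq v t) => [-> | vt]; first by exists t.
  have [[p [pp lp sp]] _] := Hd v.
  move: pp lp sp; case: p => [_ /= lp|w p /= /andP[vw pp] lp sp].
    by move: vt; rewrite lp eqxx.
  exists w => _; split => //.
  have [_ mw] := Hd w; have := mw p pp lp.
  by rewrite -sp ltnS.
have [f Hf] := fin_all_exists fex.
pose Tm := [set (v, f v) | v in [set~ t]].
have TmP : forall a b, ((a, b) \in Tm) = (a != t) && (b == f a).
  move=> a b; apply/imsetP/andP => [[v vt [-> ->]]|[aT /eqP ->]].
    by move: vt; rewrite !inE => ->.
  by exists a => //; rewrite !inE.
have cTm : #|Tm| = #|V|.-1.
  rewrite card_imset; first by rewrite cardsC1.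
  by move=> a b [].
have iTm : in_branching D t Tm.
  split.
  - apply/subsetP => [[a b]]; rewrite TmP => /andP[aT /eqP ->].
    by have [/andP[] ] := Hf a aT.
  - split => //.
    have toT : forall m v, d v = m -> connect (ugraph Tm) v t.
      elim/ltn_ind => m IH v dv; case: (eqVneq v t) => [-> | vt]; first exact: connect0.
      have [_ dlt] := Hf v vt.
      have c1 : connect (ugraph Tm) v (f v) by apply: connect1; rewrite /ugraph TmP vt eqxx.
      apply: connect_trans c1 (IH (d (f v)) _ (f v) erefl).
      by rewrite -dv.
    have symU : symmetric (ugraph Tm) by move=> a b; rewrite /ugraph orbC.
    move=> x y; apply: connect_trans (toT _ x erefl) _.
    by rewrite (sym_connect_sym symU); apply: toT.
  - move=> v; rewrite /outdeg; case: (eqVneq v t) => [->|vt].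
      rewrite cards_eq0; apply/eqP/setP => w; rewrite inE TmP eqxx.
      by rewrite in_set0.
    apply/negbTE; rewrite cards_eq0; apply/set0Pn; exists (f v).
    by rewrite inE TmP vt eqxx.
pose G := [set (y, g y) | y in Yset D xs].
have GT : G \subset Tm :\: T0.
  apply/subsetP => a /imsetP[y yY ->].
  have [gD [i [j [ij jn [vj gi]]]]] := A0P _ (Hg _ yY).
  rewrite in_setD TmP; apply/and3P; split.
  - by have := notout Hchild ij jn oT0; rewrite -gi -vj.
  - apply: contraNneq tn => yt; rewrite -yt vj; exact: mem_nth.
  - have yt : y != t by apply: contraNneq tn => yt; rewrite -yt vj; exact: mem_nth.
    have [/andP[_ /implyP/(_ yY) /eqP ->] _] := Hf y yt; exact: eqxx.
have cG : #|G| = #|Yset D xs| by rewrite card_imset // => a b [].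
have [_ [_ cT0] _] := oT0.
exists T0, Tm; split => //.
have eqD : #|T0 :\: Tm| = #|Tm :\: T0| by rewrite !cardsD setIC cT0 cTm.
by rewrite eqD; apply: leq_trans kY _; rewrite -cG; apply: subset_leq_card.
Qed.
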